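(* Let $\mathcal{X}\subseteq\mathbb{R}^d$ be nonempty, closed and convex, let $f:\mathbb{R}^d\to\mathbb{R}$ be differentiable (not necessarily convex), and assume the set $\mathcal{X}_\star:=\operatorname{arg\,min}_{x\in\mathcal{X}} f(x)$ is nonempty. Fix $x_k\in\mathcal{X}$ and $x_\star\in\mathcal{X}_\star$, and suppose that one of the following two conditions holds: (Type I) $\nabla f(x_k)\neq 0$ and $0<t_k\le \dfrac{\langle \nabla f(x_k),x_k-x_\star\rangle}{\|\nabla f(x_k)\|}$; (Type II) $\nabla f(x_k)\neq\nabla f(x_\star)$ and $0<t_k\le \dfrac{\langle \nabla f(x_k)-\nabla f(x_\star),x_k-x_\star\rangle}{\|\nabla f(x_k)-\nabla f(x_\star)\|}$. Let $x_{k+1}\in\operatorname{arg\,min}_{z\in\mathcal{X}\cap\mathcal{B}(x_k,t_k)}\langle\nabla f(x_k),z\rangle$. Then: (i) $t_k\le\|x_k-x_\star\|$; (ii) $\|x_{k+1}-x_k\|=t_k$; (iii) $\|x_{k+1}-x_\star\|^2\le\|x_k-x_\star\|^2-t_k^2$.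
   Context: $\|\cdot\|$ is the Euclidean norm and $\langle\cdot,\cdot\rangle$ the standard inner product on $\mathbb{R}^d$; $\mathcal{B}(x,t):=\{y\in\mathbb{R}^d:\|y-x\|\le t\}$. *)

(* Defs.v *)
From HB Require Import structures.
From mathcomp Require Import all_boot all_order all_algebra.
From mathcomp Require Import all_classical all_reals all_analysis.
Set Implicit Arguments. Unset Strict Implicit. Unset Printing Implicit Defensive.
Import Order.TTheory GRing.Theory Num.Theory.
Import numFieldNormedType.Exports.
Local Open Scope classical_set_scope.
Local Open Scope ring_scope.

Definition dotp (R : realType) (d : nat) (u v : 'rV[R]_d) : R :=
  \sum_(i < d) u ord0 i * v ord0 i.

Definition enorm (R : realType) (d : nat) (u : 'rV[R]_d) : R :=
  Num.sqrt (dotp u u).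

Definition eball (R : realType) (d : nat) (x : 'rV[R]_d) (t : R) : set 'rV[R]_d :=
  [set y | enorm (y - x) <= t].

Definition is_gradient (R : realType) (d : nat) (f : 'rV[R]_d -> R)
    (g : 'rV[R]_d -> 'rV[R]_d) : Prop :=
  forall x, differentiable f x /\ forall h, 'd f x h = dotp (g x) h.

Definition is_argmin (T : Type) (R : realType) (f : T -> R) (A : set T) (x : T) : Prop :=
  A x /\ forall y, A y -> f x <= f y.

(* Main.v *)
Require Import Defs.
From HB Require Import structures.
From mathcomp Require Import all_boot all_order all_algebra.
From mathcomp Require Import all_classical all_reals all_analysis.
From mathcomp Require Import ring lra.
Import Order.TTheory GRing.Theory Num.Theory.
Import numFieldNormedType.Exports.
Local Open Scope classical_set_scope.
Local Open Scope ring_scope.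

Section S.
Context {R : realType} {d : nat}.
Implicit Types u v w : 'rV[R]_d.

Lemma convX (X : set 'rV[R]_d) x y (l : R) : convex_set X -> 0 <= l -> l <= 1 ->
  X x -> X y -> X (l *: x + (1 - l) *: y).
Proof.
move=> cX l0 l1 Xx Xy.
have := cX x y (Itv01 l0 l1); rewrite !inE => /(_ Xx Xy).
by [].
Qed.

Lemma optim (X : set 'rV[R]_d) f g xs w : convex_set X -> is_gradient f g ->
  is_argmin f X xs -> X w -> 0 <= dotp (g xs) (w - xs).
Proof.
move=> cX /(_ xs) [dif dg] [Xs mins] Xw.
set v := w - xs.
have dv : derivable f xs v by exact: diff_derivable.
have := @deriveE _ _ _ f xs v dif; rewrite dg => <-.
have H : (fun h : R => h^-1 *: ((f \o shift xs) (h *: v) - f xs)) @ 0^'+ --> 'D_v f xs.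
  have K : forall F G : set_system R, F `=>` G -> (fun h : R => h^-1 *: ((f \o shift xs) (h *: v) - f xs)) @ F `=>` (fun h : R => h^-1 *: ((f \o shift xs) (h *: v) - f xs)) @ G by move=> F G FG; exact: cvg_app.
  apply: cvg_trans dv; apply: K.
  move=> A /=; rewrite /at_right /dnbhs /within /=.
  apply: filterS => x Hx xpos; apply: Hx; exact: lt0r_neq0.
apply: (cvgr_to_ge H).
near=> h.
have h0 : 0 < h by near: h; exact: nbhs_right_gt.
have h1 : h <= 1 by near: h; apply: nbhs_right_le; exact: ltr01.
rewrite /= /shift.
have -> : h *: v + xs = h *: w + (1 - h) *: xs.
  by rewrite /v scalerBr scalerBl scale1r -addrA (addrC (- _)).

rewrite /GRing.scale /=.
apply: mulr_ge0; first by rewrite invr_ge0 ltW.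
by rewrite subr_ge0; apply: mins; apply: convX => //; exact: ltW.
Unshelve. all: by end_near.
Qed.

Lemma dotpC u v : dotp u v = dotp v u.
Proof. by apply: eq_bigr => i _; rewrite mulrC. Qed.

Lemma dotpDr u v w : dotp u (v + w) = dotp u v + dotp u w.
Proof. by rewrite /dotp -big_split; apply: eq_bigr => i _; rewrite mxE mulrDr. Qed.

Lemma dotpZr u v l : dotp u (l *: v) = l * dotp u v.
Proof. by rewrite /dotp mulr_sumr; apply: eq_bigr => i _; rewrite mxE mulrCA. Qed.

Lemma dotpNr u v : dotp u (- v) = - dotp u v.
Proof. by rewrite -scaleN1r dotpZr mulN1r. Qed.

Lemma dotpBr u v w : dotp u (v - w) = dotp u v - dotp u w.
Proof. by rewrite dotpDr dotpNr. Qed.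

Lemma dotpDl u v w : dotp (v + w) u = dotp v u + dotp w u.
Proof. by rewrite dotpC dotpDr !(dotpC u). Qed.

Lemma dotpBl u v w : dotp (v - w) u = dotp v u - dotp w u.
Proof. by rewrite dotpC dotpBr !(dotpC u). Qed.

Lemma dotpZl u v l : dotp (l *: v) u = l * dotp v u.
Proof. by rewrite dotpC dotpZr dotpC. Qed.

Lemma dotpNl u v : dotp (- v) u = - dotp v u.
Proof. by rewrite dotpC dotpNr dotpC. Qed.

Lemma dotp_ge0 u : 0 <= dotp u u.
Proof. by apply: sumr_ge0 => i _; rewrite -expr2 sqr_ge0. Qed.

Lemma dotp_eq0 u : dotp u u = 0 -> u = 0.
Proof.
move=> /eqP; rewrite psumr_eq0; last by move=> i _; rewrite -expr2 sqr_ge0.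
move=> /allP H; apply/rowP => i; rewrite mxE.
have := H i (mem_index_enum i); rewrite /= mulf_eq0 orbb => /eqP //.
Qed.

Lemma CS u v : dotp u v ^+ 2 <= dotp u u * dotp v v.
Proof.
set a := dotp u u; set b := dotp v v; set c := dotp u v.
have := dotp_ge0 (b *: u - c *: v).
rewrite !(dotpBl, dotpBr, dotpZl, dotpZr) (dotpC v u) -/a -/b -/c => H.
have b0 : 0 <= b by exact: dotp_ge0.
have [bz|bp] := eqVneq b 0.
  have v0 : v = 0 by apply: dotp_eq0; exact: bz.
  have c0 : c = 0 by rewrite /c v0 /dotp big1 // => i _; rewrite mxE mulr0.
  by rewrite c0 bz mulr0 expr2 mulr0.
have bp' : 0 < b by rewrite lt_def bp b0.
nra.
Qed.

Lemma enorm_sq u : enorm u ^+ 2 = dotp u u.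
Proof. by rewrite /enorm sqr_sqrtr // dotp_ge0. Qed.

Lemma enorm_ge0 u : 0 <= enorm u.
Proof. exact: sqrtr_ge0. Qed.


Lemma core (c a b : 'rV[R]_d) (tk : R) : 0 < dotp c c -> 0 < tk ->
  tk * enorm c <= dotp c b -> dotp a a <= tk ^+ 2 ->
  ((dotp a a < tk ^+ 2) || (dotp a b < tk ^+ 2) -> dotp c b <= dotp c a) ->
  dotp a a = tk ^+ 2 /\ tk ^+ 2 <= dotp a b.
Proof.
move=> cc0 tk0 Hb Ha HP.
have [P|] := boolP ((dotp a a < tk ^+ 2) || (dotp a b < tk ^+ 2)); last first.
  by rewrite negb_or -!leNgt => /andP[h1 h2]; split => //; apply/eqP; rewrite eq_le Ha h1.
exfalso.
set N := enorm c.
have N2 : N ^+ 2 = dotp c c by exact: enorm_sq.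
have N0 : 0 < N by rewrite /N /enorm sqrtr_gt0.
have h1 := HP P.
have CSa := CS c a.
have e1 : tk * N <= dotp c a by apply: le_trans h1.
have aa : dotp a a = tk ^+ 2.
  apply/eqP; rewrite eq_le Ha /=.
  have : (tk * N) ^+ 2 <= dotp c a ^+ 2 by have := mulr_gt0 tk0 N0; nra.
  move=> H; rewrite -N2 in CSa; nra.
have ca : dotp c a = tk * N.
  apply/eqP; rewrite eq_le e1 andbT.
  rewrite aa in CSa; have := mulr_gt0 tk0 N0; nra.
have cb : dotp c b = tk * N by apply/eqP; rewrite eq_le Hb -ca h1.
set u := tk *: c - N *: a.
have uu : dotp u u = 0.
  rewrite /u !(dotpBl, dotpBr, dotpZl, dotpZr) (dotpC a c) ca aa -N2; ring.
have ub : dotp u b = 0.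
  have := CS u b; rewrite uu mul0r => H.
  apply/eqP; rewrite -sqrf_eq0 eq_le H sqr_ge0 //.
move: ub; rewrite /u dotpBl !dotpZl cb => ub.
have ab : dotp a b = tk ^+ 2.
  apply: (mulfI (lt0r_neq0 N0)); rewrite expr2; lra.
by move: P; rewrite aa ab ltxx.
Qed.

Lemma lam (p q r : R) : 0 <= p -> 0 <= r -> (0 < p \/ 0 < q) ->
  exists l, [/\ 0 < l, l <= 1 & l ^+ 2 * r <= p + 2 * l * q].
Proof.
move=> p0 r0 [pp|qp].
- have D0 : 0 < p + q ^+ 2 + r + 2 by nra.
  exists (p / (p + q ^+ 2 + r + 2)).
  set l := p / _.
  have lD : l * (p + q ^+ 2 + r + 2) = p by rewrite /l mulfVK // lt0r_neq0.
  have l0 : 0 < l by rewrite /l divr_gt0.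
  have l1 : l <= 1 by rewrite /l ler_pdivrMr // mul1r; nra.
  have e1 : l ^+ 2 * r <= l * r by rewrite expr2 -mulrA ler_piMl // mulr_ge0 // ltW.
  have e3 : 0 <= l * (p + (q + 1) ^+ 2 + 1) by apply: mulr_ge0; [exact: ltW | nra].
  split => //; nra.
- have D0 : 0 < 2 * q + r + 1 by nra.
  exists (2 * q / (2 * q + r + 1)).
  set l := _ / _.
  have lD : l * (2 * q + r + 1) = 2 * q by rewrite /l mulfVK // lt0r_neq0.
  have l0 : 0 < l by rewrite /l divr_gt0 // mulr_gt0.
  have l1 : l <= 1 by rewrite /l ler_pdivrMr // mul1r; nra.
  have e1 : l * r <= 2 * q by nra.
  have e2 : l * (l * r) <= l * (2 * q) by rewrite ler_pM2l.
  split => //; nra.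
Qed.

End S.

Theorem theorem1 (R : realType) (d : nat) (X : set 'rV[R]_d)
    (f : 'rV[R]_d -> R) (gradf : 'rV[R]_d -> 'rV[R]_d)
    (xk xstar xk1 : 'rV[R]_d) (tk : R) :
  X !=set0 -> closed X -> convex_set X ->
  is_gradient f gradf ->
  (exists x, is_argmin f X x) ->
  X xk -> is_argmin f X xstar ->
  ((gradf xk != 0 /\ 0 < tk /\
      tk <= dotp (gradf xk) (xk - xstar) / enorm (gradf xk))
   \/
   (gradf xk != gradf xstar /\ 0 < tk /\
      tk <= dotp (gradf xk - gradf xstar) (xk - xstar)
            / enorm (gradf xk - gradf xstar))) ->
  is_argmin (fun z => dotp (gradf xk) z) (X `&` eball xk tk) xk1 ->
  [/\ tk <= enorm (xk - xstar),
      enorm (xk1 - xk) = tk &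
      enorm (xk1 - xstar) ^+ 2 <= enorm (xk - xstar) ^+ 2 - tk ^+ 2].
Proof.
move=> _ _ cX grad _ Xk argS Htype [[Xk1 Bk1] mink1].
set g := gradf xk; set gs := gradf xstar.
set a := xk - xk1; set b := xk - xstar in Htype *.
have Ea : xk1 = xk - a by apply/rowP => i; rewrite /a !mxE; ring.
have Eb : xstar = xk - b by apply/rowP => i; rewrite /b !mxE; ring.
clearbody a b.
have tk0 : 0 < tk by case: Htype => [[_ []]|[_ []]].
have ea : xk1 - xk = - a by rewrite Ea; apply/rowP => i; rewrite !mxE; ring.
have aa_le : dotp a a <= tk ^+ 2.
  have := enorm_sq (xk1 - xk); rewrite {2 3}ea dotpNl dotpNr opprK => <-.
  have := enorm_ge0 (xk1 - xk); move: Bk1; rewrite /eball /= => h1 h2; nra.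
pose P := (dotp a a < tk ^+ 2) || (dotp a b < tk ^+ 2).
have hK : P -> dotp g b <= dotp g a.
  move=> HP.
  have p0 : 0 <= tk ^+ 2 - dotp a a by rewrite subr_ge0.
  have hor : 0 < tk ^+ 2 - dotp a a \/ 0 < dotp a a - dotp a b.
    case/orP: HP => h; first by left; rewrite subr_gt0.
    have [h'|h'] := ltrP (dotp a a) (tk ^+ 2); first by left; rewrite subr_gt0.
    right; rewrite subr_gt0; apply: lt_le_trans h h'.
  have [l [l0 l1 Hl]] := lam _ _ _ p0 (dotp_ge0 (a - b)) hor.
  set z := l *: xstar + (1 - l) *: xk1.
  have Xz : X z by apply: convX => //; [exact: ltW | case: argS].
  have ez : z - xk = - a + l *: (a - b).
    by apply/rowP => i; rewrite /z Ea Eb !mxE; ring.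
  have Bz : enorm (z - xk) <= tk.
    have := enorm_sq (z - xk); rewrite ez.
    rewrite !(dotpDl, dotpDr, dotpBl, dotpBr, dotpZl, dotpZr, dotpNl, dotpNr) in Hl *.
    rewrite ?(dotpC b a) in Hl; rewrite ?(dotpC b a).
    have := enorm_ge0 (z - xk); nra.
  have := mink1 z (conj Xz Bz).
  have -> : z = xk1 + l *: (a - b).
    by apply/rowP => i; rewrite /z Ea Eb !mxE; ring.
  rewrite dotpDr dotpZr dotpBr -subr_ge0 addrC addKr => h.
  rewrite -subr_ge0; move: h; rewrite pmulr_rge0 //.
have [c [cc0 Hb HP]] : exists c : 'rV[R]_d, [/\ 0 < dotp c c, tk * enorm c <= dotp c b &
    (P -> dotp c b <= dotp c a)].
  have pos : forall c : 'rV[R]_d, c != 0 -> 0 < dotp c c.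
    move=> c c0; rewrite lt0r dotp_ge0 andbT; apply/eqP => h.
    by move: c0; rewrite (dotp_eq0 _ h) eqxx.
  have npos : forall c : 'rV[R]_d, c != 0 -> 0 < enorm c.
    by move=> c c0; rewrite /enorm sqrtr_gt0 pos.
  case: Htype => [[g0 [_ h]]|[g0 [_ h]]].
    exists g; split => //; first exact: pos.
    by rewrite -(ler_pdivlMr _ _ (npos _ g0)).
  exists (g - gs); split.
  - by apply: pos; rewrite subr_eq0.
  - have g0' : g - gs != 0 by rewrite subr_eq0.
    by rewrite -(ler_pdivlMr _ _ (npos _ g0')).
  - move=> /hK h1.
    have := optim _ _ _ _ _ cX grad argS Xk1.
    have -> : xk1 - xstar = b - a by apply/rowP => i; rewrite Ea Eb !mxE; ring.
    rewrite dotpBr !dotpBl -/g -/gs; lra.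
have [aa ab] := core _ _ _ _ cc0 tk0 Hb aa_le HP.
split.
- set N := enorm c.
  have N2 : N ^+ 2 = dotp c c by exact: enorm_sq.
  have N0 : 0 <= N by exact: enorm_ge0.
  have CSb := CS c b.
  have bb := enorm_sq b.
  have b0 := enorm_ge0 b.
  rewrite -N2 in CSb.
  have Np : 0 < N by rewrite /N /enorm sqrtr_gt0.
  have h1 : 0 < tk * N by exact: mulr_gt0.
  have h2 : (tk * N) ^+ 2 <= dotp c b ^+ 2.
    by rewrite !expr2; apply: ler_pM => //; exact: ltW.
  have NN : 0 < N ^+ 2 by exact: exprn_gt0.
  have h3 : tk ^+ 2 <= dotp b b.
    rewrite -(ler_pM2l NN); nra.
  nra.
- have := enorm_sq (xk1 - xk); rewrite {2 3}ea dotpNl dotpNr opprK aa => h.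
  have := enorm_ge0 (xk1 - xk); nra.
- rewrite !enorm_sq.
  have -> : xk1 - xstar = b - a by apply/rowP => i; rewrite Ea Eb !mxE; ring.
  rewrite !(dotpBl, dotpBr) (dotpC b a) aa; lra.
Qed.
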